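(* Let $E$ be a real Banach space, let $x,y\in E$ be linearly independent, let $[m,M]=\{\alpha\in\mathbb{R}:x+\alpha y\perp y\}$, and for $\alpha\in D(x,y)\setminus[m,M]$ let $f(\alpha)$ be the unique real number with $x+\alpha y\perp x-f(\alpha)y$ (so $f$ is defined almost everywhere on $\mathbb{R}\setminus[m,M]$, and $t+f(t)\neq0$ wherever $f(t)$ is defined). Then for every $\alpha>M$, $$\|x+\alpha y\|=\|x+My\|\exp\Big(\int_M^\alpha \frac{dt}{t+f(t)}\Big),$$ and for every $\alpha<m$, $$\|x+\alpha y\|=\|x+my\|\exp\Big(-\int_\alpha^m \frac{dt}{t+f(t)}\Big),$$ where the integrals are Lebesgue integrals.
   Context: For $u,v\in E$, $u\perp v$ means $\|u+\beta v\|\ge\|u\|$ for every $\beta\in\mathbb{R}$ (Birkhoff–James orthogonality). For linearly independent $x,y\in E$, $D(x,y)$ denotes the set of $\alpha\in\mathbb{R}$ at which the convex function $\phi(\alpha)=\|x+\alpha y\|$ is differentiable; its complement has Lebesgue measure zero. The set $\{\alpha: x+\alpha y\perp y\}$ is a closed bounded interval $[m,M]$, and for $\alpha\in D(x,y)\setminus[m,M]$ there is a unique $f(\alpha)\in\mathbb{R}$ with $x+\alpha y\perp x-f(\alpha)y$. *)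

(* Defs.v *)
From HB Require Import structures.
From mathcomp Require Import all_boot all_order all_algebra.
From mathcomp Require Import all_classical all_reals all_analysis.
Set Implicit Arguments. Unset Strict Implicit. Unset Printing Implicit Defensive.
Import Order.TTheory GRing.Theory Num.Theory numFieldNormedType.Exports.
Local Open Scope classical_set_scope.
Local Open Scope ring_scope.

Definition bj_orth {R : realType} {E : normedModType R} (u v : E) : Prop :=
  forall b : R, `|u| <= `|u + b *: v|.

Definition Dxy {R : realType} {E : normedModType R} (x y : E) : set R :=
  [set a | derivable (fun t : R => `|x + t *: y|) a 1].

(* f(a) := the unique b with x + a y ⊥ x - b y, for a in D(x,y) \ [m,M];
   set to 0 elsewhere (irrelevant: the complement of D(x,y) is null). *)
Definition fxy {R : realType} {E : normedModType R} (x y : E) (m M : R) (a : R) : R :=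
  if `[< Dxy x y a /\ ~ (m <= a <= M) >]
  then xget 0 [set b : R | bj_orth (x + a *: y) (x - b *: y)]
  else 0.

(* Main.v *)
Require Import Defs.
From HB Require Import structures.
From mathcomp Require Import all_boot all_order all_algebra.
From mathcomp Require Import all_classical all_reals all_analysis.
From mathcomp Require Import ring lra.
From mathcomp Require Import measurable_realfun.
Import Order.TTheory GRing.Theory Num.Theory numFieldNormedType.Exports.
Local Open Scope classical_set_scope.
Local Open Scope ring_scope.


Section Convex.
Context {R : realType} (phi : R -> R) (K : R).
Hypothesis Hc : forall s t u, s < t -> t < u ->
  phi t * (u - s) <= phi s * (u - t) + phi u * (t - s).
Hypothesis HL : forall s t, `|phi t - phi s| <= K * `|t - s|.

Definition slope s t := (phi t - phi s) / (t - s).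

Lemma sl1 {s t u} : s < t -> t < u -> slope s t <= slope s u.
Proof.
move=> st tu; rewrite /slope.
have h1 : 0 < t - s by rewrite subr_gt0.
have h2 : 0 < u - s by rewrite subr_gt0 (lt_trans st).
rewrite ler_pdivrMr // mulrAC ler_pdivlMr //.
have := Hc _ _ _ st tu; nra.
Qed.

Lemma sl2 {s t u} : s < t -> t < u -> slope s u <= slope t u.
Proof.
move=> st tu; rewrite /slope.
have h1 : 0 < u - t by rewrite subr_gt0.
have h2 : 0 < u - s by rewrite subr_gt0 (lt_trans st).
rewrite ler_pdivrMr // mulrAC ler_pdivlMr //.
have := Hc _ _ _ st tu; nra.
Qed.

Lemma slope_mono {s t s' t'} : s < t -> s' < t' -> s <= s' -> t <= t' ->
  slope s t <= slope s' t'.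
Proof.
move=> st st' ss tt.
apply: (@le_trans _ _ (slope s t')).
  move: tt; rewrite le_eqVlt => /predU1P[<-//|]; exact: sl1.
move: ss; rewrite le_eqVlt => /predU1P[<-//|]; move=> ss; exact: sl2.
Qed.

Lemma slope_bound {s t} : s < t -> `|slope s t| <= K.
Proof.
move=> st; rewrite /slope normrM normfV.
have h : 0 < `|t - s| by rewrite normr_gt0 subr_eq0 gt_eqF.
by rewrite ler_pdivrMr.
Qed.

Lemma slope_lb {s t} : s < t -> - K <= slope s t.
Proof. by move=> /slope_bound; rewrite ler_norml => /andP[]. Qed.
Lemma slope_ub {s t} : s < t -> slope s t <= K.
Proof. by move=> /slope_bound; rewrite ler_norml => /andP[]. Qed.

Definition rd t := inf [set slope t u | u in [set u | t < u]].
Definition ld t := sup [set slope s t | s in [set s | s < t]].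

Lemma rd_ne t : [set slope t u | u in [set u | t < u]] !=set0.
Proof. by exists (slope t (t + 1)), (t + 1) => //=; rewrite ltrDl. Qed.
Lemma ld_ne t : [set slope s t | s in [set s | s < t]] !=set0.
Proof. by exists (slope (t - 1) t), (t - 1) => //=; rewrite ltrBlDr ltrDl. Qed.

Lemma rd_le {t u} : t < u -> rd t <= slope t u.
Proof.
move=> tu; apply: ge_inf; last by exists u.
by exists (- K) => _ [v /= tv <-]; exact: slope_lb.
Qed.

Lemma ld_ge {s t} : s < t -> slope s t <= ld t.
Proof.
move=> st; apply: ub_le_sup; last by exists s.
by exists K => _ [v /= tv <-]; exact: slope_ub.
Qed.

Lemma rd_ge t c : (forall u, t < u -> c <= slope t u) -> c <= rd t.
Proof. by move=> H; apply: lb_le_inf; [exact: rd_ne| move=> _ [u /= tu <-]; exact: H]. Qed.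

Lemma ld_le t c : (forall s, s < t -> slope s t <= c) -> ld t <= c.
Proof. by move=> H; apply: ge_sup; [exact: ld_ne| move=> _ [u /= tu <-]; exact: H]. Qed.

Lemma ld_rd t : ld t <= rd t.
Proof.
apply: ld_le => s st; apply: rd_ge => u tu.
by apply: slope_mono => //; exact: ltW.
Qed.

Lemma rd_ld {s t} : s < t -> rd s <= ld t.
Proof. by move=> st; apply: (le_trans (rd_le st)); exact: ld_ge. Qed.

Lemma rd_mono {s t} : s <= t -> rd s <= rd t.
Proof.
move=> H; have [->//|st] : s = t \/ s < t by move: H; rewrite le_eqVlt => /orP[/eqP|]; auto.
exact: (le_trans (rd_ld st) (ld_rd t)).
Qed.

Lemma ld_mono {s t} : s <= t -> ld s <= ld t.
Proof.
move=> H; have [->//|st] : s = t \/ s < t by move: H; rewrite le_eqVlt => /orP[/eqP|]; auto.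
exact: (le_trans (ld_rd s) (rd_ld st)).
Qed.

Lemma rd_bound t : `|rd t| <= K.
Proof.
rewrite ler_norml; apply/andP; split.
  by apply: rd_ge => u tu; exact: slope_lb.
have t1 : t < t + 1 by rewrite ltrDl.
exact: (le_trans (rd_le t1) (slope_ub t1)).
Qed.

Lemma ld_bound t : `|ld t| <= K.
Proof.
rewrite ler_norml; apply/andP; split; last first.
  by apply: ld_le => u tu; exact: slope_ub.
have t1 : t - 1 < t by rewrite ltrBlDr ltrDl.
exact: (le_trans (slope_lb t1) (ld_ge t1)).
Qed.


Lemma support t rho : ld t <= rho -> rho <= rd t ->
  forall u, phi t + rho * (u - t) <= phi u.
Proof.
move=> h1 h2 u; case: (ltgtP t u) => tu.
- have := le_trans h2 (rd_le tu); rewrite /slope ler_pdivlMr ?subr_gt0 //; lra.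
- have := le_trans (ld_ge tu) h1; rewrite /slope ler_pdivrMr ?subr_gt0 //; lra.
- by rewrite tu subrr mulr0 addr0.
Qed.

Lemma bracket s t : s < t -> rd s * (t - s) <= phi t - phi s <= ld t * (t - s).
Proof.
move=> st; apply/andP; split.
  by have := rd_le st; rewrite /slope ler_pdivlMr ?subr_gt0.
by have := ld_ge st; rewrite /slope ler_pdivrMr ?subr_gt0.
Qed.

Lemma local_support t c d : 0 < d ->
  (forall h, `|h| < d -> phi t + c * h <= phi (t + h)) -> ld t <= c /\ c <= rd t.
Proof.
move=> d0 H; split.
  apply: ld_le => s st.
  pose h := Num.min (t - s) (d / 2).
  have h0 : 0 < h by rewrite lt_min subr_gt0 st divr_gt0.
  have hs : h <= t - s by rewrite ge_min lexx.
  have hd : h <= d / 2 by rewrite ge_min lexx orbT.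
  have := H (- h); rewrite normrN gtr0_norm // => /(_ (le_lt_trans hd _)).
  move=> /(_ ltac:(lra)) Hh.
  have s1 : t - h < t by lra.
  apply: (le_trans (@slope_mono s t (t - h) t st s1 ltac:(lra) (lexx _))).
  rewrite /slope ler_pdivrMr; last by lra.
  have -> : t - (t - h) = h by ring.
  lra.
apply: rd_ge => u tu.
pose h := Num.min (u - t) (d / 2).
have h0 : 0 < h by rewrite lt_min subr_gt0 tu divr_gt0.
have hs : h <= u - t by rewrite ge_min lexx.
have hd : h <= d / 2 by rewrite ge_min lexx orbT.
have := H h; rewrite gtr0_norm // => /(_ ltac:(lra)) Hh.
have s1 : t < t + h by lra.
apply: (le_trans _ (@slope_mono t (t + h) t u s1 tu (lexx _) ltac:(lra))).
rewrite /slope ler_pdivlMr; last by lra.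
have -> : t + h - t = h by ring.
lra.
Qed.


Lemma deriv_cvg t : ld t = rd t ->
  (fun h : R => h^-1 *: ((phi \o shift t) (h *: (1:R)) - phi t)) @ (0:R)^' --> rd t.
Proof.
move=> E; apply/cvgrPdist_lt => e e0.
have ee : rd t < rd t + e by rewrite ltrDl.
have [_ [u /= tu <-] Hu] := inf_lt (rd_ne t) ee.
have [_ [s /= st <-] Hs] : exists2 y, [set slope s t | s in [set s | s < t]] y & ld t - e < y.
  by apply: sup_gt; [exact: ld_ne| rewrite ltrBlDr ltrDl].
exists (Num.min (u - t) (t - s)) => /=; first by rewrite lt_min !subr_gt0 tu st.
move=> h /=; rewrite sub0r normrN lt_min => /andP[hu hs] hn.
have -> : h^-1 *: ((phi \o shift t) (h *: (1:R)) - phi t) =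
    (phi (t + h) - phi t) / h.
  have -> : h%:A = h :> R by rewrite /GRing.scale /= mulr1.
  rewrite /comp /shift [h + t]addrC [RHS]mulrC; reflexivity.
case: (ltgtP h 0) hn => // h0 _.
- have q : (phi (t + h) - phi t) / h = slope (t + h) t.
    rewrite /slope; have -> : t - (t + h) = - h by ring.
    by rewrite invrN mulrN -mulNr opprB.
  rewrite q.
  have s1 : t + h < t by lra.
  have a1 := ld_ge s1.
  have a2 : slope s t <= slope (t + h) t.
    apply: slope_mono => //; move: hs; rewrite ltr0_norm //; lra.
  rewrite ger0_norm; first by lra.
  by rewrite subr_ge0 -E.
- have q : (phi (t + h) - phi t) / h = slope t (t + h).
    by rewrite /slope; have -> : t + h - t = h by ring.
  rewrite q.
  have s1 : t < t + h by lra.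
  have a1 := rd_le s1.
  have a2 : slope t (t + h) <= slope t u.
    apply: slope_mono => //; move: hu; rewrite gtr0_norm //; lra.
  rewrite ler0_norm; first by lra.
  by rewrite subr_le0.
Qed.

Lemma deriv_ok t : ld t = rd t ->
  derivable phi t 1.
Proof. by move=> E; apply/cvg_ex; exists (rd t); exact: deriv_cvg. Qed.


Lemma countable_nd : countable [set t | ld t < rd t].
Proof.
apply/countable_injP.
pose q (t : R) : rat := match pselect (ld t < rd t) with
  | left H => projT1 (cid (rat_in_itvoo H))
  | right _ => 0%R end.
have qP t : ld t < rd t -> ld t < ratr (q t) < rd t.
  move=> H; rewrite /q; case: pselect => // H'.
  by case: cid => /= r; rewrite in_itv.
exists (fun t => choice.pickle (q t)) => s t /[!inE] Hs Ht /= E.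
have {E} E : q s = q t by exact: (pcan_inj choice.pickleK E).
have := qP s Hs; have := qP t Ht; rewrite E => /andP[a1 a2] /andP[b1 b2].
case: (ltgtP s t) => // st.
- have := rd_ld st; lra.
- have := rd_ld st; lra.
Qed.

End Convex.


Lemma telescope_const {R : realType} (D B : R -> R) (p q : R) : p <= q ->
  (forall s t, p <= s -> s <= t -> t <= q -> B s <= B t) ->
  (forall s t, p <= s -> s <= t -> t <= q -> `|D t - D s| <= (t - s) * (B t - B s)) ->
  D q = D p.
Proof.
move=> pq Bm HD.
have key n : (0 < n)%N -> `|D q - D p| <= (q - p) / n%:R * (B q - B p).
  move=> n0.
  have n0' : 0 < n%:R :> R by rewrite ltr0n.
  set d := (q - p) / n%:R.
  have d0 : 0 <= d by rewrite divr_ge0 // subr_ge0.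
  have Ed : n%:R * d = q - p by rewrite /d mulrC divfK ?gt_eqF.
  have x_in k : (k <= n)%N -> p <= p + k%:R * d <= q.
    move=> kn; apply/andP; split; first by rewrite lerDl mulr_ge0.
    have : k%:R * d <= n%:R * d by rewrite ler_wpM2r // ler_nat.
    rewrite Ed; lra.
  suff H k : (k <= n)%N -> `|D (p + k%:R * d) - D p| <= d * (B (p + k%:R * d) - B p).
    have := H n (leqnn n); rewrite Ed.
    by have -> : p + (q - p) = q by ring.
  elim: k => [_|k IH kn].
    by rewrite mul0r addr0 subrr normr0 subrr mulr0.
  have kn' : (k <= n)%N by exact: ltnW.
  have := IH kn'; move: (x_in _ kn') (x_in _ kn) => /andP[a1 a2] /andP[b1 b2] h1.
  have e1 : p + k.+1%:R * d = (p + k%:R * d) + d by rewrite -addn1 natrD mulrDl mul1r addrA.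
  rewrite e1 in b2 *.
  have kk : p + k%:R * d <= p + k%:R * d + d by rewrite lerDl.
  have h2' := HD _ _ a1 kk b2.
  have e2 : (p + k%:R * d + d) - (p + k%:R * d) = d by ring.
  rewrite e2 in h2'.
  apply: (le_trans (ler_distD (D (p + k%:R * d)) _ _)).
  have := ler_wpM2l d0 (Bm _ _ (lexx p) a1 a2).
  move=> _; rewrite [X in X <= _]distrC in h2'; rewrite !mulrBr in h1 h2' *.
  have h3 : `|D (p + k%:R * d + d) - D (p + k%:R * d)| = `|D (p + k%:R * d) - D (p + k%:R * d + d)| by rewrite distrC.
  lra.
set C := (q - p) * (B q - B p).
have C0 : 0 <= C by rewrite mulr_ge0 // subr_ge0 // Bm.
apply/eqP; rewrite -subr_eq0 -normr_eq0; apply/negPn/negP => ne.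
have e0 : 0 < `|D q - D p| by rewrite lt_def ne normr_ge0.
set e := `|D q - D p| in e0 ne *.
pose n := (Num.trunc (C / e)).+1.
have K := key n isT; rewrite -/e in K.
suff : (q - p) / n%:R * (B q - B p) < e by move=> /(le_lt_trans K); rewrite ltxx.
have hn := truncnS_gt (C / e); rewrite -/n in hn.
have n0 : 0 < n%:R :> R by rewrite ltr0n.
rewrite mulrAC -/C ltr_pdivrMr //.
by rewrite mulrC -ltr_pdivrMr.
Qed.


Lemma ln_bracket {R : realType} (a b : R) : 0 < a -> 0 < b ->
  (b - a) / b <= ln b - ln a <= (b - a) / a.
Proof.
have up (x y : R) : 0 < x -> 0 < y -> ln y - ln x <= (y - x) / x.
  move=> x0 y0.
  have h : -1 < (y - x) / x by rewrite ltrNl -mulNr opprB ltr_pdivrMr //; lra.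
  have := le_ln1Dx h.
  have -> : 1 + (y - x) / x = y / x by field; rewrite gt_eqF.
  by rewrite ln_div ?posrE.
move=> a0 b0; apply/andP; split; last exact: up.
have := up _ _ b0 a0.
have -> : (a - b) / b = - ((b - a) / b) by rewrite -mulNr opprB.
lra.
Qed.

Lemma cmp_bound {R : realType} (rs rt fs ft c K t s : R) : 0 < c -> c <= fs -> c <= ft ->
  rs <= rt -> `|rs| <= K -> `|ft - fs| <= K * (t - s) ->
  rt / fs - rs / ft <= (rt / c + K * K * t / (c * c)) - (rs / c + K * K * s / (c * c)).
Proof.
move=> c0 cfs cft rst rsK fK.
have fs0 : 0 < fs by exact: lt_le_trans c0 cfs.
have ft0 : 0 < ft by exact: lt_le_trans c0 cft.
have fs0' : 0 < fs by exact: lt_le_trans c0 cfs.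
have e1 : rt / fs - rs / ft = (rt - rs) / fs + rs * (ft - fs) / (fs * ft).
  by field; rewrite ?gt_eqF.
have e2 : (rt - rs) / fs <= (rt - rs) / c.
  by apply: ler_wpM2l; [rewrite subr_ge0|rewrite lef_pV2 ?posrE].
have e3 : rs * (ft - fs) / (fs * ft) <= K * (K * (t - s)) / (c * c).
  apply: (le_trans (ler_norm _)).
  rewrite normrM normfV normrM (gtr0_norm (mulr_gt0 fs0' ft0)).
  apply: ler_pM.
  - by rewrite mulr_ge0.
  - by rewrite invr_ge0 mulr_ge0 // ltW.
  - apply: ler_pM => //.
  - by rewrite lef_pV2 ?posrE ?mulr_gt0 // ler_pM // ltW.
have -> : (rt / c + K * K * t / (c * c)) - (rs / c + K * K * s / (c * c)) =
  (rt - rs) / c + K * (K * (t - s)) / (c * c) by field; rewrite gt_eqF.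
rewrite e1; lra.
Qed.


Lemma mu_itv {R : realType} (s t : R) : s <= t ->
  (@lebesgue_measure R) [set` `[s, t]] = (t - s)%:E.
Proof.
move=> st; rewrite lebesgue_measure_itv /=.
case: ifPn; first by move=> _; rewrite EFinB.
rewrite lte_fin -leNgt => ts. 
have -> : t = s by apply/eqP; rewrite eq_le ts st.
by rewrite subrr.
Qed.

Lemma integrable_bound {R : realType} {s t B : R} {g : R -> R} : s <= t ->
  measurable_fun [set` `[s, t]] g -> (forall x, s <= x <= t -> `|g x| <= B) ->
  (@lebesgue_measure R).-integrable [set` `[s, t]] (EFin \o g).
Proof.
move=> st mg gB; apply: measurable_bounded_integrable => //.
  by rewrite -[X in (X < _)%E]/(lebesgue_measure [set` `[s, t]]) mu_itv // ltry.
exists B; split; first by rewrite num_real.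
move=> M BM x /=; rewrite in_itv /= => xi.
by apply: (le_trans (gB _ xi)); exact: ltW.
Qed.

Lemma Rint_cst_itv {R : realType} (s t k : R) : s <= t ->
  Rintegral (@lebesgue_measure R) [set` `[s, t]] (fun=> k) = k * (t - s).
Proof. by move=> st; rewrite Rintegral_cst // -[X in fine X]/(lebesgue_measure [set` `[s, t]]) mu_itv. Qed.


Lemma sub_itv_cc {R : realType} (p q s t : R) : p <= s -> t <= q ->
  [set` `[s, t]] `<=` [set` `[p, q]].
Proof.
move=> ps tq x /=; rewrite !in_itv /= => /andP[a b].
by rewrite (le_trans ps a) (le_trans b tq).
Qed.

Lemma ftc_conv {R : realType} (phi rho : R -> R) (p q c K : R) :
  p <= q -> 0 < c -> (forall t, c <= phi t) ->
  (forall s t, `|phi t - phi s| <= K * `|t - s|) ->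
  (forall t, `|rho t| <= K) ->
  (forall s t, s <= t -> rho s <= rho t) ->
  measurable_fun [set` `[p, q]] (fun t => rho t / phi t) ->
  (forall s t, p <= s -> s < t -> t <= q ->
     rho s * (t - s) <= phi t - phi s <= rho t * (t - s)) ->
  (forall s u t, p <= s -> s <= u -> u <= t -> t <= q ->
     rho s / phi t <= rho u / phi u <= rho t / phi s) ->
  (@lebesgue_measure R).-integrable [set` `[p, q]] (EFin \o (fun t => rho t / phi t)) /\
  Rintegral (@lebesgue_measure R) [set` `[p, q]] (fun t => rho t / phi t) =
    ln (phi q) - ln (phi p).
Proof.
move=> pq c0 cphi HL rK rmono mg Hbr Hpt.
set g := fun t => rho t / phi t.
have phi0 t : 0 < phi t by exact: lt_le_trans c0 (cphi t).
have gB x : `|g x| <= K / c.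
  rewrite /g normrM normfV (gtr0_norm (phi0 x)).
  apply: ler_pM => //; first by rewrite invr_ge0 ltW.
  by rewrite lef_pV2 ?posrE.
have Iint s t : p <= s -> s <= t -> t <= q ->
    (@lebesgue_measure R).-integrable [set` `[s, t]] (EFin \o g).
  move=> ps st tq.
  have mg' : measurable_fun [set` `[s, t]] g.
    by apply: measurable_funS mg => //; exact: sub_itv_cc.
  exact: (integrable_bound st mg' (fun x _ => gB x)).
split; first exact: (Iint _ _ (lexx p) pq (lexx q)).
have Ib s t : p <= s -> s <= t -> t <= q ->
    (t - s) * (rho s / phi t) <= Rintegral (@lebesgue_measure R) [set` `[s, t]] g
    <= (t - s) * (rho t / phi s).
  move=> ps st tq; apply/andP; split.
    rewrite mulrC -Rint_cst_itv //.
    apply: le_Rintegral => //.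
      by apply: (@integrable_bound R s t `|rho s / phi t|) => //.
      exact: (Iint _ _ ps st tq).
    move=> x /=; rewrite in_itv /= => /andP[a b].
    by have /andP[] := Hpt _ _ _ ps a b tq.
  rewrite mulrC -Rint_cst_itv //.
  apply: le_Rintegral => //.
    exact: (Iint _ _ ps st tq).
    by apply: (@integrable_bound R s t `|rho t / phi s|) => //.
  move=> x /=; rewrite in_itv /= => /andP[a b].
  by have /andP[] := Hpt _ _ _ ps a b tq.
have Isplit s t : p <= s -> s <= t -> t <= q ->
    Rintegral (@lebesgue_measure R) [set` `[p, t]] g -
    Rintegral (@lebesgue_measure R) [set` `[p, s]] g =
    Rintegral (@lebesgue_measure R) [set` `[s, t]] g.
  move=> ps st tq.
  rewrite (@Rintegral_itvB R g (BLeft p) (BRight t) s) ?bnd_simp //; last first.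
    exact: (Iint _ _ (lexx p) (le_trans ps st) tq).
  apply: Rintegral_itv_obnd_cbnd.
  apply: integrableS (Iint _ _ ps st tq) => //.
  by move=> x /=; rewrite !in_itv /= => /andP[a ->]; rewrite ltW.
pose D t := Rintegral (@lebesgue_measure R) [set` `[p, t]] g - ln (phi t).
pose B t := rho t / c + K * K * t / (c * c).
have Dpq : D q = D p.
  apply: (@telescope_const R D B p q pq).
    move=> s t _ st _; rewrite /B; apply: lerD.
      by apply: ler_wpM2r; [rewrite invr_ge0 ltW | exact: rmono].
    apply: ler_wpM2r; first by rewrite invr_ge0 mulr_ge0 // ltW.
    by apply: ler_wpM2l => //; rewrite mulr_ge0 // (le_trans _ (rK p)).
  move=> s t ps st tq.
  have [->|st'] := eqVneq s t; first by rewrite !subrr normr0 mulr0.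
  have st2 : s < t by rewrite lt_neqAle st' st.
  have -> : D t - D s = Rintegral (@lebesgue_measure R) [set` `[s, t]] g
      - (ln (phi t) - ln (phi s)).
    by rewrite -Isplit // /D; ring.
  have := Ib _ _ ps st tq; move=> /andP[I1 I2].
  have /andP[L1 L2] := ln_bracket (phi s) (phi t) (phi0 s) (phi0 t).
  have /andP[H1 H2] := Hbr _ _ ps st2 tq.
  have M1 : (phi t - phi s) / phi s <= (t - s) * (rho t / phi s).
    rewrite mulrA [(t - s) * _]mulrC; apply: ler_wpM2r => //.
    by rewrite invr_ge0 ltW.
  have M2 : (t - s) * (rho s / phi t) <= (phi t - phi s) / phi t.
    rewrite mulrA [(t - s) * _]mulrC; apply: ler_wpM2r => //.
    by rewrite invr_ge0 ltW.
  have st0 : 0 < t - s by rewrite subr_gt0.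
  have Lip : `|phi t - phi s| <= K * (t - s).
    by rewrite -(ger0_norm (ltW st0)); exact: HL.
  have C1 := cmp_bound (rho s) (rho t) (phi s) (phi t) c K t s c0 (cphi s) (cphi t) (rmono _ _ st) (rK s) Lip.
  have C2 := ler_wpM2l (ltW st0) C1.
  rewrite -/(B t) -/(B s) in C2.
  rewrite mulrBr in C2.
  rewrite ler_norml; apply/andP; split; lra.
rewrite /D in Dpq.
move: Dpq; rewrite set_itv1 Rintegral_set1 => Dpq.
lra.
Qed.


Lemma ae_transfer {R : realType} (D N : set R) (G H : R -> R) :
  measurable D -> countable N -> (forall t, D t -> ~ N t -> G t = H t) ->
  measurable_fun D H ->
  (@lebesgue_measure R).-integrable D (EFin \o H) ->
  (@lebesgue_measure R).-integrable D (EFin \o G) /\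
  Rintegral (@lebesgue_measure R) D G = Rintegral (@lebesgue_measure R) D H.
Proof.
move=> mD cN GH mH iH.
have mN : measurable N := countable_measurable (fun t => measurable_set1 t) cN.
have mG : measurable_fun D G.
  have -> : D = (D `&` N) `|` (D `\` N).
    apply/seteqP; split => x.
      by move=> Dx; case: (pselect (N x)) => Nx; [left|right].
    by case=> -[].
  rewrite measurable_funU; [split|exact: measurableI|exact: measurableD].
    move=> _ Y mY; apply: countable_measurable; first by move=> t; exact: measurable_set1.
    by apply: (sub_countable _ cN); apply: subset_card_le => x [[]].
  apply: (eq_measurable_fun H); first by move=> x /[!inE] -[Dx Nx]; rewrite GH.
  by apply: measurable_funS mH => // x [].
split.
  apply/integrableP; split; first exact/measurable_EFinP.
  apply: (@le_lt_trans _ _ (\int[lebesgue_measure]_(x in D) `|(EFin \o H) x|)%E); last first.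
    by case/integrableP : iH.
  rewrite le_eqVlt; apply/orP; left; apply/eqP; apply: ae_eq_integral => //.
  - by apply: measurableT_comp => //; exact/measurable_EFinP.
  - by apply: measurableT_comp => //; exact/measurable_EFinP.
  - apply: ae_eq_abse.
    exists N; split => //; first exact: countable_lebesgue_measure0.
    move=> x /= /not_implyP[Dx ne]; apply: contrapT => Nx; apply: ne.
    by rewrite GH.
rewrite /Rintegral; congr fine; apply: ae_eq_integral => //; try exact/measurable_EFinP.
exists N; split => //; first exact: countable_lebesgue_measure0.
move=> x /= /not_implyP[Dx ne]; apply: contrapT => Nx; apply: ne.
by rewrite GH.
Qed.


Lemma lip_cont {R : realType} (f : R -> R) (K : R) : 0 <= K ->
  (forall s t, `|f t - f s| <= K * `|t - s|) -> continuous f.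
Proof.
move=> K0 Hf t; apply/cvgrPdist_lt => e e0.
have K1 : 0 < K + 1 by lra.
exists (e / (K + 1)); first by rewrite /= divr_gt0.
move=> s /=; rewrite /ball /= => ts.
apply: (le_lt_trans (Hf s t)).
have : K * `|t - s| <= K * (e / (K + 1)) by apply: ler_wpM2l => //; exact: ltW.
have : K * (e / (K + 1)) < e.
  rewrite mulrA ltr_pdivrMr // ; nra.
lra.
Qed.

Lemma divle_pos {R : realType} (a b x y : R) : 0 <= a -> a <= b -> 0 < x -> x <= y ->
  a / y <= b / x.
Proof.
move=> a0 ab x0 xy.
apply: (@le_trans _ _ (a / x)).
  by apply: ler_wpM2l => //; rewrite lef_pV2 ?posrE // (lt_le_trans x0).
by apply: ler_wpM2r => //; rewrite invr_ge0 ltW.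
Qed.

Lemma divle_neg {R : realType} (a b x y : R) : a <= b -> b <= 0 -> 0 < x -> x <= y ->
  a / x <= b / y.
Proof.
move=> ab b0 x0 xy.
have y0 : 0 < y by exact: lt_le_trans x0 xy.
apply: (@le_trans _ _ (a / y)).
  apply: ler_wnM2l; first exact: (le_trans ab).
  by rewrite lef_pV2 ?posrE.
by apply: ler_wpM2r => //; rewrite invr_ge0 ltW.
Qed.


Section Norm.
Context {R : realType} {E : normedModType R} (x y : E).
Hypothesis Hind : forall a b : R, a *: x + b *: y = 0 -> a = 0 /\ b = 0.

Definition nphi (t : R) := `|x + t *: y|.

Lemma nphi_Hc s t u : s < t -> t < u ->
  nphi t * (u - s) <= nphi s * (u - t) + nphi u * (t - s).
Proof.
move=> st tu.
have e : (u - s) *: (x + t *: y) = (u - t) *: (x + s *: y) + (t - s) *: (x + u *: y).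
  rewrite !scalerDr !scalerA addrACA -!scalerDl; congr (_ *: _ + _ *: _); ring.
have us : 0 < u - s by rewrite subr_gt0 (lt_trans st).
have ut : 0 < u - t by rewrite subr_gt0.
have ts : 0 < t - s by rewrite subr_gt0.
rewrite /nphi -{1}(gtr0_norm us) mulrC -normrZ e.
apply: (le_trans (ler_normD _ _)).
by rewrite !normrZ !gtr0_norm // [_ * (u - t)]mulrC [_ * (t - s)]mulrC.
Qed.

Lemma nphi_Lip s t : `|nphi t - nphi s| <= `|y| * `|t - s|.
Proof.
apply: (le_trans (ler_dist_dist _ _)).
have -> : x + t *: y - (x + s *: y) = (t - s) *: y.
  by rewrite scalerBl opprD addrACA subrr add0r.
by rewrite normrZ mulrC.
Qed.

Lemma nphi_pos t : 0 < nphi t.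
Proof.
rewrite /nphi normr_gt0; apply/eqP => H.
have := Hind 1 t; rewrite scale1r => /(_ H) [].
by move=> /eqP; rewrite oner_eq0.
Qed.

Lemma y_pos : 0 < `|y|.
Proof.
rewrite normr_gt0; apply/eqP => H.
have := Hind 0 1; rewrite scale0r add0r scale1r => /(_ H) [_].
by move=> /eqP; rewrite oner_eq0.
Qed.

Lemma nphi_cont : continuous nphi.
Proof. exact: (lip_cont nphi `|y| (normr_ge0 y) nphi_Lip). Qed.

Lemma nphi_lb t : `|t| * `|y| - `|x| <= nphi t.
Proof.
rewrite lerBlDr /nphi -normrZ.
have e : t *: y = (x + t *: y) - x by rewrite addrC addKr.
by rewrite {1}e; apply: (le_trans (ler_normB _ _)).
Qed.

Lemma nphi_min : exists t0, forall u, nphi t0 <= nphi u.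
Proof.
set L := (2 * `|x| + 1) / `|y|.
have L0 : 0 < L by rewrite divr_gt0 ?y_pos //; have := normr_ge0 x; lra.
have LL : - L <= L by lra.
have [c cI cmin] := @EVT_min R nphi (- L) L LL (continuous_subspaceT nphi_cont).
exists c => u.
have [uI|uI] := boolP (u \in `[- L, L]); first exact: cmin.
have z : 0 \in `[- L, L] by rewrite in_itv /=; apply/andP; split; lra.
apply: (le_trans (cmin _ z)).
have hu : L < `|u|.
  move: uI; rewrite in_itv /= negb_and -!ltNge => /orP[] H.
    by rewrite ltr0_norm; lra.
  by rewrite gtr0_norm; lra.
have := nphi_lb u.
have : L * `|y| = 2 * `|x| + 1 by rewrite /L divfK // gt_eqF // y_pos.
have := ltr_pM2r y_pos; move=> /(_ L `|u|); rewrite hu => /esym H1.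
rewrite /nphi scale0r addr0.
have := normr_ge0 x.
lra.
Qed.

End Norm.


Lemma conv_extend {R : realType} {E : normedModType R} (v e : E) :
  (forall s : R, 0 < s -> `|v + e| <= `|s *: v + e|) ->
  forall s : R, `|v + e| <= `|s *: v + e|.
Proof.
move=> H s; have [s0|s0] := ltP 0 s; first exact: H.
pose l : R := (2 * (1 - s))^-1.
have l0 : 0 < l by rewrite invr_gt0; lra.
have l1 : l <= 2^-1.
  rewrite lef_pV2 ?posrE; lra.
have eq : (2^-1 : R) *: v + e = l *: (s *: v + e) + (1 - l) *: (v + e).
  rewrite !scalerDr !scalerA addrACA -!scalerDl.
  rewrite -{1}(scale1r e); congr (_ *: _ + _ *: _); rewrite /l; field; lra.
have H2 := H _ (_ : 0 < 2^-1); rewrite invr_gt0 in H2.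
have {}H2 := H2 ltac:(lra).
rewrite eq in H2.
have := le_trans H2 (ler_normD _ _).
rewrite !normrZ !gtr0_norm; [|lra|lra].
move=> H3.
have : l * `|v + e| <= l * `|s *: v + e| by lra.
by rewrite ler_pM2l.
Qed.

Section Orth.
Context {R : realType} {E : normedModType R} (x y : E).
Hypothesis Hind : forall a b : R, a *: x + b *: y = 0 -> a = 0 /\ b = 0.
Local Notation phi := (nphi x y).
Let Hc := nphi_Hc x y.
Let HL := nphi_Lip x y.

Lemma orth_y a : bj_orth (x + a *: y) y <-> forall u, phi a <= phi u.
Proof.
split => H.
  move=> u; have := H (u - a); rewrite /nphi -addrA -scalerDl.
  by have -> : a + (u - a) = u by ring.
move=> b; have := H (a + b); rewrite /nphi scalerDl addrA.
by [].
Qed.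

Lemma orth_exist t rho : ld phi t <= rho -> rho <= rd phi t -> rho != 0 ->
  bj_orth (x + t *: y) (x - (phi t / rho - t) *: y).
Proof.
move=> h1 h2 r0.
set b0 := phi t / rho - t.
set d := phi t / rho.
have sup := support phi `|y| HL t rho h1 h2.
have ue : x + t *: y = (x - b0 *: y) + d *: y.
  rewrite -addrA; congr (x + _); rewrite -scaleNr -scalerDl; congr (_ *: _).
  by rewrite /b0 /d; ring.
move=> beta; rewrite ue.
have -> : x - b0 *: y + d *: y + beta *: (x - b0 *: y) = (1 + beta) *: (x - b0 *: y) + d *: y.
  by rewrite scalerDl scale1r addrAC.
apply: conv_extend => s s0.
have -> : s *: (x - b0 *: y) + d *: y = s *: (x + ((d - s * b0) / s) *: y).
  rewrite !scalerDr scalerA -scaleNr scalerA -addrA; congr (_ + _).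
  rewrite -scalerDl; congr (_ *: _); field; rewrite gt_eqF //.
rewrite normrZ gtr0_norm //.
have := sup ((d - s * b0) / s).
have -> : (d - s * b0) / s - t = (1 - s) * d / s.
  rewrite /b0 -/d; field; rewrite gt_eqF //.
have -> : rho * ((1 - s) * d / s) = (1 - s) * phi t / s.
  rewrite /d; field; rewrite gt_eqF //.
move=> H.
rewrite -ue -[X in X <= _]/(phi t).
have : s * (phi t + (1 - s) * phi t / s) <= s * phi ((d - s * b0) / s).
  by rewrite ler_pM2l.
have -> : s * (phi t + (1 - s) * phi t / s) = phi t.
  by field; rewrite gt_eqF //.
by [].
Qed.

Lemma orth_vec (t b beta : R) :
  x + t *: y + beta *: (x - b *: y) = (1 + beta) *: x + (t - beta * b) *: y.
Proof. by rewrite scalerBr scalerA scalerDl scale1r scalerBl addrACA. Qed.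

Lemma orth_unique t b : bj_orth (x + t *: y) (x - b *: y) ->
  t + b != 0 /\ (ld phi t <= phi t / (t + b) /\ phi t / (t + b) <= rd phi t).
Proof.
move=> H; set d := t + b.
have d0 : d != 0.
  apply/eqP => d0; have := H (-1); rewrite orth_vec.
  have -> : t - -1 * b = d by rewrite /d; ring.
  rewrite d0 scale0r addr0 addrN scale0r normr0.
  by have := nphi_pos x y Hind t; rewrite /nphi; lra.
split => //.
apply: (local_support phi Hc t (phi t / d) `|d|); first by rewrite normr_gt0.
move=> h hd.
have hh : h * h < d * d.
  by rewrite -!expr2 -(ger0_norm (sqr_ge0 h)) -(ger0_norm (sqr_ge0 d)) !normrX ltrXn2r // ?normr_ge0.
have dh : 0 < d * (d + h) by nra.
have dh0 : d + h != 0 by apply/eqP => e; move: dh; rewrite e mulr0 ltxx.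
set s := d / (d + h).
have s0 : 0 < s.
  have -> : s = d * (d + h) / ((d + h) * (d + h)) by rewrite /s; field.
  by rewrite divr_gt0 // -expr2 exprn_even_gt0.
have := H (s - 1); rewrite orth_vec.
have -> : (1 + (s - 1)) *: x + (t - (s - 1) * b) *: y = s *: (x + (t + h) *: y).
  rewrite scalerDr scalerA; congr (_ *: _ + _ *: _); first by ring.
  by rewrite /s /d; field; rewrite -/d.
rewrite normrZ gtr0_norm // -/(phi t) -/(phi (t + h)) => H1.
have : phi t / s <= phi (t + h) by rewrite ler_pdivrMr // mulrC.
have -> : phi t / s = phi t + phi t / d * h.
  rewrite /s; field; rewrite ?d0 ?dh0 //=.
by [].
Qed.

End Orth.


Section Char.
Context {R : realType} {E : normedModType R} (x y : E).
Hypothesis Hind : forall a b : R, a *: x + b *: y = 0 -> a = 0 /\ b = 0.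
Local Notation phi := (nphi x y).
Let Hc := nphi_Hc x y.
Let HL := nphi_Lip x y.

Lemma fxy_char (m M t : R) :
  [set a : R | bj_orth (x + a *: y) y] = [set` `[m, M]] ->
  ld phi t = rd phi t -> ~ (m <= t <= M) ->
  t + fxy x y m M t = phi t / rd phi t.
Proof.
move=> Hset Elr tI.
have r0 : rd phi t != 0.
  apply/eqP => r0; apply: tI.
  have : [set a : R | bj_orth (x + a *: y) y] t.
    apply/orth_y => u.
    have l0 : ld phi t <= 0 by rewrite Elr r0.
    have l1 : 0 <= rd phi t by rewrite r0.
    have := support phi `|y| HL t 0 l0 l1 u.
    by rewrite mul0r addr0.
  by rewrite Hset /= in_itv.
rewrite /fxy asboolT; last first.
  by split => //; exact: (deriv_ok phi `|y| Hc HL t Elr).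
set S := [set b : R | bj_orth (x + t *: y) (x - b *: y)].
have Sb0 : S (phi t / rd phi t - t).
  by apply: orth_exist => //; rewrite Elr.
have := xgetPex 0 (ex_intro _ _ Sb0).
set b := xget 0 S => Sb.
have [d0 [h1 h2]] := orth_unique x y Hind t b Sb.
have e : phi t / (t + b) = rd phi t.
  by apply/eqP; rewrite eq_le h2 -Elr h1.
have p0 := nphi_pos x y Hind t.
rewrite -e; field.
by rewrite d0 gt_eqF.
Qed.

End Char.


Lemma countableU1 {R : realType} (A : set R) (z : R) :
  countable A -> countable (A `|` [set z]).
Proof.
move=> /countable_injP[f injf]; apply/countable_injP.
exists (fun t => if t == z then 0%N else (f t).+1) => s t /[!inE] Hs Ht /=.
case: eqP => [->|sz]; case: eqP => [->//|tz] //.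
move=> [] /injf; apply; rewrite inE.
- by case: Hs.
- by case: Ht.
Qed.

Lemma inv_cont {R : realType} (f : R -> R) (c K : R) : 0 < c -> 0 <= K ->
  (forall t, c <= f t) -> (forall s t, `|f t - f s| <= K * `|t - s|) ->
  continuous (fun t => (f t)^-1).
Proof.
move=> c0 K0 cf Hf; apply: (lip_cont _ (K / (c * c))).
  by rewrite divr_ge0 // mulr_ge0 // ltW.
move=> s t.
have fs : 0 < f s by exact: lt_le_trans c0 (cf s).
have ft : 0 < f t by exact: lt_le_trans c0 (cf t).
have -> : (f t)^-1 - (f s)^-1 = (f s - f t) / (f s * f t).
  by field; rewrite !gt_eqF.
rewrite normrM normfV (gtr0_norm (mulr_gt0 fs ft)) distrC.
have H2 : (f s * f t)^-1 <= (c * c)^-1.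
  by rewrite lef_pV2 ?posrE ?mulr_gt0 // ler_pM // ltW.
have -> : K / (c * c) * `|t - s| = (K * `|t - s|) * (c * c)^-1 by rewrite mulrAC.
apply: ler_pM => //; first by rewrite invr_ge0 mulr_ge0 // ltW.
Qed.

Theorem lemma4 (R : realType) (E : completeNormedModType R) (x y : E) (m M : R) :
  (forall a b : R, a *: x + b *: y = 0 -> a = 0 /\ b = 0) ->
  [set a : R | bj_orth (x + a *: y) y] = [set` `[m, M]] ->
  (forall a : R, M < a ->
     (@lebesgue_measure R).-integrable [set` `[M, a]]
        (fun t => ((t + fxy x y m M t)^-1)%:E) /\
     `|x + a *: y| = `|x + M *: y| *
        expR (Rintegral (@lebesgue_measure R) [set` `[M, a]]
                (fun t => (t + fxy x y m M t)^-1))) /\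
  (forall a : R, a < m ->
     (@lebesgue_measure R).-integrable [set` `[a, m]]
        (fun t => ((t + fxy x y m M t)^-1)%:E) /\
     `|x + a *: y| = `|x + m *: y| *
        expR (- Rintegral (@lebesgue_measure R) [set` `[a, m]]
                (fun t => (t + fxy x y m M t)^-1))).
Proof.
move=> Hind Hset.
pose phi := nphi x y.
have Hc := nphi_Hc x y.
have HL := nphi_Lip x y.
pose K := `|y|.
have K0 : 0 <= K by exact: normr_ge0.
have p0 := nphi_pos x y Hind.
have inset a : (forall u, phi a <= phi u) -> m <= a <= M.
  move=> H; have : [set a : R | bj_orth (x + a *: y) y] a by exact/orth_y.
  by rewrite Hset /= in_itv.
have [t0 Ht0] := nphi_min x y Hind.
have mM : m <= M by have /andP[a b] := inset t0 Ht0; exact: le_trans a b.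
have minm : forall u, phi m <= phi u.
  apply/orth_y; have : [set a : R | bj_orth (x + a *: y) y] m.
    by rewrite Hset /= in_itv /= lexx mM.
  by [].
have minM : forall u, phi M <= phi u.
  apply/orth_y; have : [set a : R | bj_orth (x + a *: y) y] M.
    by rewrite Hset /= in_itv /= lexx mM.
  by [].
have cN := countable_nd phi K HL.
have icont := inv_cont phi (phi M) K (p0 M) K0 minM HL.
have meas (rho : R -> R) : {homo rho : s t / s <= t} -> forall D, measurable D ->
    measurable_fun D (fun t => rho t / phi t).
  move=> hr D mD; apply: measurable_funM.
    exact: nondecreasing_measurable.
  apply: measurable_funS (continuous_measurable_fun icont) => //.
have Hinv t : phi t / rd phi t != 0 ->
    (phi t / rd phi t)^-1 = rd phi t / phi t by move=> _; rewrite invf_div.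
split.
- move=> a Ma.
  have rdM : 0 <= rd phi M.
    apply: rd_ge => u Mu; rewrite /slope divr_ge0 // ?subr_ge0 ?minM //.
    exact: ltW.
  have rd0 s : M <= s -> 0 <= rd phi s.
    by move=> Ms; exact: le_trans rdM (rd_mono phi K Hc HL Ms).
  have nd s u : M <= s -> s <= u -> phi s <= phi u.
    move=> Ms; rewrite le_eqVlt => /predU1P[->//|su].
    have /andP[h _] := bracket phi K HL s u su.
    have : 0 <= rd phi s * (u - s) by rewrite mulr_ge0 // ?rd0 // subr_ge0 ltW.
    lra.
  have Hbr : forall s t, M <= s -> s < t -> t <= a ->
      rd phi s * (t - s) <= phi t - phi s <= rd phi t * (t - s).
    move=> s t Ms st ta; have /andP[h1 h2] := bracket phi K HL s t st.
    rewrite h1 /= (le_trans h2) //; apply: ler_wpM2r; first by rewrite subr_ge0 ltW.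
    exact: ld_rd.
  have Hpt : forall s u t, M <= s -> s <= u -> u <= t -> t <= a ->
      rd phi s / phi t <= rd phi u / phi u <= rd phi t / phi s.
    move=> s u t Ms su ut ta; apply/andP; split.
      exact: (divle_pos _ _ _ _ (rd0 _ Ms) (rd_mono phi K Hc HL su) (p0 u) (nd _ _ (le_trans Ms su) ut)).
    exact: (divle_pos _ _ _ _ (rd0 _ (le_trans Ms su)) (rd_mono phi K Hc HL ut) (p0 s) (nd _ _ Ms su)).
  have [Iint Ieq] := ftc_conv phi (rd phi) M a (phi M) K (ltW Ma) (p0 M) minM HL
    (rd_bound phi K HL) (fun s t => rd_mono phi K Hc HL)
    (meas _ (fun s t => rd_mono phi K Hc HL) _ (measurable_itv _)) Hbr Hpt.
  have GH t : [set` `[M, a]] t -> ~ ([set t | ld phi t < rd phi t] `|` [set M]) t ->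
      (t + fxy x y m M t)^-1 = rd phi t / phi t.
    rewrite /= in_itv /= => /andP[Mt ta] HN.
    have tM : M < t.
      by rewrite lt_neqAle Mt andbT; apply/eqP => e; apply: HN; right.
    have Elr : ld phi t = rd phi t.
      apply/eqP; rewrite eq_le (ld_rd phi Hc t) /= leNgt; apply/negP => h; apply: HN; left; exact: h.
    rewrite (fxy_char x y Hind m M t Hset Elr); last first.
      by move=> /andP[_ h]; move: tM; rewrite ltNge h.
    by rewrite invf_div.
  have [IG EG] := ae_transfer _ _ _ _ (measurable_itv _) (countableU1 _ M cN) GH
    (meas _ (fun s t => rd_mono phi K Hc HL) _ (measurable_itv _)) Iint.
  split; first exact: IG.
  rewrite EG Ieq expRB !lnK ?posrE //.
  change (phi a = phi M * (phi a / phi M)).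
  by field; rewrite gt_eqF.
- move=> a am.
  have ldm : ld phi m <= 0.
    apply: ld_le => s sm; rewrite /slope ler_pdivrMr ?subr_gt0 // mul0r subr_le0.
    exact: minm.
  have ld0 s : s <= m -> ld phi s <= 0.
    by move=> sm; exact: le_trans (ld_mono phi K Hc HL sm) ldm.
  have ni s u : s <= u -> u <= m -> phi u <= phi s.
    rewrite le_eqVlt => /predU1P[->//|su] um.
    have /andP[_ h] := bracket phi K HL s u su.
    have : ld phi u * (u - s) <= 0 by rewrite mulr_le0_ge0 // ?ld0 // subr_ge0 ltW.
    lra.
  have Hbr : forall s t, a <= s -> s < t -> t <= m ->
      ld phi s * (t - s) <= phi t - phi s <= ld phi t * (t - s).
    move=> s t ams st tm; have /andP[h1 h2] := bracket phi K HL s t st.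
    rewrite h2 andbT (le_trans _ h1) //; apply: ler_wpM2r; first by rewrite subr_ge0 ltW.
    exact: ld_rd.
  have Hpt : forall s u t, a <= s -> s <= u -> u <= t -> t <= m ->
      ld phi s / phi t <= ld phi u / phi u <= ld phi t / phi s.
    move=> s u t ams su ut tm; apply/andP; split.
      exact: (divle_neg _ _ _ _ (ld_mono phi K Hc HL su) (ld0 _ (le_trans ut tm)) (p0 t) (ni _ _ ut tm)).
    exact: (divle_neg _ _ _ _ (ld_mono phi K Hc HL ut) (ld0 _ tm) (p0 u) (ni _ _ su (le_trans ut tm))).
  have [Iint Ieq] := ftc_conv phi (ld phi) a m (phi m) K (ltW am) (p0 m) minm HL
    (ld_bound phi K HL) (fun s t => ld_mono phi K Hc HL)
    (meas _ (fun s t => ld_mono phi K Hc HL) _ (measurable_itv _)) Hbr Hpt.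
  have GH t : [set` `[a, m]] t -> ~ ([set t | ld phi t < rd phi t] `|` [set m]) t ->
      (t + fxy x y m M t)^-1 = ld phi t / phi t.
    rewrite /= in_itv /= => /andP[atm tm] HN.
    have tm' : t < m.
      by rewrite lt_neqAle tm andbT; apply/eqP => e; apply: HN; right.
    have Elr : ld phi t = rd phi t.
      apply/eqP; rewrite eq_le (ld_rd phi Hc t) /= leNgt; apply/negP => h; apply: HN; left; exact: h.
    rewrite (fxy_char x y Hind m M t Hset Elr); last first.
      by move=> /andP[h _]; move: tm'; rewrite ltNge h.
    by rewrite invf_div Elr.
  have [IG EG] := ae_transfer _ _ _ _ (measurable_itv _) (countableU1 _ m cN) GH
    (meas _ (fun s t => ld_mono phi K Hc HL) _ (measurable_itv _)) Iint.
  split; first exact: IG.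
  rewrite EG Ieq opprB expRB !lnK ?posrE //.
  change (phi a = phi m * (phi a / phi m)).
  by field; rewrite gt_eqF.
Qed.
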